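(* Let $c$ be constant. Then for all integers $a\ge b\ge0$, $$Y(z^a\bar z^b)=az^{a-1}\bar z^b-mc\sum_{0\le k\le (a-b-1)/m}(-1)^{mk}z^{a-mk-1}\bar z^{b+mk},$$ and for all integers $b\ge a\ge0$, $$Y(z^a\bar z^b)=az^{a-1}\bar z^b+mc\sum_{1\le k\le (b-a)/m}(-1)^{mk}z^{a+mk-1}\bar z^{b-mk}.$$
   Context: Let $m\ge2$, $\zeta=e^{2\pi i/m}$, and let $z,\bar z$ be independent variables. For $j=0,\dots,m-1$ let $s_j$ be the algebra automorphism of $\mathbb C[z,\bar z]$ with $s_j(z)=-\zeta^j\bar z$, $s_j(\bar z)=-\zeta^{-j}z$ (these generate the dihedral group $I_2(m)$; the $s_j$ are its reflections). For a constant $c\in\mathbb C$ define the (Dunkl) operator $Y$ on $\mathbb C[z,\bar z]$ by $Y(q)=\frac{\partial q}{\partial z}-c\sum_{j=0}^{m-1}\frac{q-s_j(q)}{z+\zeta^j\bar z}$. *)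

(* Defs.v *)
(* Polynomials in two independent variables z, zbar are represented as
   {poly {poly C}}: the OUTER variable is z, the INNER variable is zbar. *)
From mathcomp Require Import all_boot all_algebra.
From mathcomp Require Import reals trigo.
From mathcomp Require Export complex.
Import GRing.Theory Num.Theory.
Local Open Scope ring_scope.

Set Implicit Arguments.
Unset Strict Implicit.
Unset Printing Implicit Defensive.

Definition zeta (R : realType) (m : nat) : R[i] :=
  (cos (2 * pi / m%:R) +i* sin (2 * pi / m%:R))%C.

Definition Zv (R : realType) : {poly {poly R[i]}} := 'X.
Definition Zbv (R : realType) : {poly {poly R[i]}} := ('X)%:P.
Definition cst (R : realType) (a : R[i]) : {poly {poly R[i]}} := a%:P%:P.

Definition ev2 (R : realType) (q u v : {poly {poly R[i]}}) : {poly {poly R[i]}} :=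
  \sum_(i < size q) \sum_(k < size q`_i) cst ((q`_i)`_k) * u ^+ i * v ^+ k.

Definition refl (R : realType) (m j : nat) (q : {poly {poly R[i]}}) :=
  ev2 q (- cst (zeta R m ^+ j) * Zbv R) (- cst (zeta R m ^- j) * Zv R).

(* the Dunkl operator Y; q^`() is d/dz (derivative in the outer variable z);
   the quotient by z + zeta^j zbar (monic in z) is exact. *)
Definition dunklY (R : realType) (m : nat) (c : R[i]) (q : {poly {poly R[i]}}) :=
  q^`() - cst c * \sum_(j < m) ((q - refl m j q) %/ (Zv R + cst (zeta R m ^+ j) * Zbv R)).

(* Main.v *)
Require Import Defs.
From mathcomp Require Import all_boot all_algebra.
From mathcomp Require Import reals trigo complex.
From mathcomp Require Import all_order ring lra zify.
Import Order.TTheory GRing.Theory Num.Theory.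
Local Open Scope ring_scope.

Section Z.
Variable R : realType.

Lemma cmulE (a b c d : R) : ((a +i* b) * (c +i* d) = (a*c - b*d) +i* (a*d + b*c))%C.
Proof. by []. Qed.

Lemma zetaX m i : zeta R m ^+ i =
  (cos (2 * pi / m%:R * i%:R) +i* sin (2 * pi / m%:R * i%:R))%C.
Proof.
rewrite /zeta; set t := 2 * pi / m%:R.
elim: i => [|i IH]; first by rewrite expr0 mulr0 cos0 sin0.
rewrite exprS IH cmulE -[i.+1]addn1 natrD [t * (_ + 1)]mulrDr mulr1 cosD sinD.
by congr (_ +i* _)%C; ring.
Qed.

Lemma cos_lt1 (x : R) : 0 < x < pi *+ 2 -> cos x < 1.
Proof.
move=> /andP[x0 x2].
have -> : x = x / 2 + x / 2 by field.
rewrite cosD -expr2 -[sin _ * _]expr2 cos2sin2.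
have : 0 < sin (x / 2).
  apply: sin_gt0_pi; apply/andP; split; first by rewrite divr_gt0.
  by rewrite ltr_pdivrMr // mulr_natr.
move=> h; have : 0 < sin (x / 2) ^+ 2 by rewrite exprn_gt0.
move=> h2; lra.
Qed.

Lemma zeta_eq1 m i : (0 < m)%N -> (zeta R m ^+ i == 1) = (m %| i)%N.
Proof.
move=> m0.
have zm : zeta R m ^+ m = 1.
  rewrite zetaX mulfVK ?pnatr_eq0 -?lt0n //.
  have -> : (2 * pi = pi *+ 2 :> R) by rewrite mulrC mulr_natr.
  by rewrite cos2pi sin2pi.
rewrite {1}(divn_eq i m) exprD mulnC exprM zm expr1n mul1r /dvdn.
have : (i %% m < m)%N by rewrite ltn_mod.
case: (posnP (i %% m)) => [->|r0 rm]; first by rewrite expr0 eqxx.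
apply/negbTE/eqP => h.
have := congr1 (@complex.Re R) h; rewrite zetaX /= => hc.
have : @cos R (2 * pi / m%:R * (i %% m)%:R) < 1.
  apply: cos_lt1; apply/andP; split.
    by rewrite !mulr_gt0 ?invr_gt0 ?ltr0n ?pi_gt0.
  have e : pi *+ 2 = 2 * pi / m%:R * m%:R :> R.
    by rewrite mulfVK ?pnatr_eq0 -?lt0n // mulrC mulr_natr.
  by rewrite e ltr_pM2l ?ltr_nat // !mulr_gt0 ?invr_gt0 ?ltr0n ?pi_gt0.
by rewrite hc ltxx.
Qed.

Lemma zeta_m m : (0 < m)%N -> zeta R m ^+ m = 1.
Proof. by move=> m0; apply/eqP; rewrite zeta_eq1. Qed.

Lemma zeta_neq0 m j : (0 < m)%N -> zeta R m ^+ j != 0.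
Proof.
move=> m0; rewrite expf_neq0 //; apply/eqP => z0.
by have := @zeta_m m m0; rewrite z0 expr0n gtn_eqF // => /eqP; rewrite eq_sym oner_eq0.
Qed.

Lemma sum_root (x : R[i]) m : x ^+ m = 1 ->
  \sum_(j < m) x ^+ j = if x == 1 then m%:R else 0.
Proof.
move=> xm; case: eqP => [->|/eqP x1].
  by under eq_bigr do rewrite expr1n; rewrite sumr_const card_ord.
have := subrXX 1 x m; rewrite xm expr1n subrr.
under eq_bigr do rewrite expr1n mul1r.
move/esym/eqP; rewrite mulf_eq0 subr_eq0 eq_sym (negbTE x1) /=.
by move/eqP.
Qed.

Lemma sum_zeta m i : (0 < m)%N ->
  \sum_(j < m) (zeta R m ^+ i) ^+ j = if (m %| i)%N then m%:R else 0.
Proof.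
move=> m0; rewrite sum_root ?zeta_eq1 //.
by rewrite exprAC zeta_m // expr1n.
Qed.

Lemma sum_zetaV m i : (0 < m)%N ->
  \sum_(j < m) ((zeta R m ^+ i)^-1) ^+ j = if (m %| i)%N then m%:R else 0.
Proof.
move=> m0; rewrite sum_root ?invr_eq1 ?zeta_eq1 //.
by rewrite exprVn exprAC zeta_m // expr1n invr1.
Qed.
End Z.

Lemma reidx (V : zmodType) (F : nat -> V) m n N : (0 < m)%N -> (n <= N)%N ->
  \sum_(i < n) (if (m %| i)%N then F i else 0) =
  \sum_(k < N | (m * k < n)%N) F (m * k).
Proof.
move=> m0; elim: n => [|n IH] nN.
  by rewrite big_ord0 big_pred0 // => k; rewrite ltn0.
rewrite big_ord_recr /= IH ?(ltnW nN) //.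
rewrite [RHS](bigID (fun k : 'I_N => (m * k < n)%N)) /=.
congr (_ + _).
  by apply: eq_bigl => k; case: (ltnP (m * k) n) => h; rewrite ?andbF // andbT (leq_trans h (leqnSn n)).
case: ifP => [dv|ndv].
  have qN : (n %/ m < N)%N by apply: leq_ltn_trans (leq_div n m) nN.
  rewrite (big_pred1 (Ordinal qN)); first by rewrite -[in LHS](divnK dv) mulnC.
  move=> k /=; rewrite ltnS -leqNgt -eqn_leq -(inj_eq val_inj) /=.
  by rewrite -{1}(divnK dv) mulnC eqn_pmul2r.
rewrite big_pred0 // => k; rewrite ltnS -leqNgt -eqn_leq.
by apply/negbTE; apply: contraFN ndv => /eqP <-; rewrite dvdn_mulr.
Qed.

Lemma shift_sum (V : zmodType) (h : nat -> V) m n : (0 < m)%N ->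
  \sum_(i < n) (if (m %| i.+1)%N then h i.+1 else 0) =
  \sum_(1 <= k < n.+1 | (m * k <= n)%N) h (m * k).
Proof.
move=> m0; have := @reidx V h m n.+1 n.+1 m0 (leqnn _).
rewrite big_ord_recl dvdn0 -(big_mkord (fun k => (m * k < n.+1)%N) (fun k => h (m * k)%N)).
rewrite big_ltn_cond // !muln0 /= => H.
have {}H := addrI _ H.
apply: eq_trans; first by apply: eq_trans H; by apply: eq_bigr.
by apply: eq_bigl => k; rewrite ltnS.
Qed.

Section P.
Variable R : realType.
Local Notation Z := (Zv R).
Local Notation W := (Zbv R).

Lemma cstM (a b : R[i]) : cst (a * b) = cst a * cst b.
Proof. by rewrite /cst !rmorphM. Qed.
Lemma cstX (a : R[i]) n : cst (a ^+ n) = cst a ^+ n.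
Proof. by rewrite /cst !rmorphXn. Qed.
Lemma cst1 : cst (1 : R[i]) = 1.
Proof. by rewrite /cst !rmorph1. Qed.
Lemma cst0 : cst (0 : R[i]) = 0.
Proof. by rewrite /cst !rmorph0. Qed.
Lemma cstN (a : R[i]) : cst (- a) = - cst a.
Proof. by rewrite /cst !rmorphN. Qed.
Lemma cst_nat n : cst (n%:R : R[i]) = n%:R.
Proof. by rewrite /cst !rmorph_nat. Qed.
Lemma cst_sum n (F : 'I_n -> R[i]) : cst (\sum_(i < n) F i) = \sum_(i < n) cst (F i).
Proof. by rewrite /cst !rmorph_sum. Qed.

Lemma ev2_mono a b u v : ev2 (Z ^+ a * W ^+ b) u v = u ^+ a * v ^+ b.
Proof.
rewrite /ev2 /Zv /Zbv -rmorphXn mulrC mul_polyC.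
have Xn0 : ('X^b : {poly R[i]}) != 0 by rewrite monic_neq0 ?monicXn.
rewrite size_scale // size_polyXn big_ord_recr /= big1 ?add0r; last first.
  by move=> i _; rewrite !coefE ltn_eqF // mulr0 size_poly0 big_ord0.
rewrite !coefE eqxx mulr1 size_polyXn big_ord_recr /= big1 ?add0r.
  by rewrite coefXn eqxx cst1 mul1r.
by move=> k _; rewrite coefXn ltn_eqF // cst0 !mul0r.
Qed.

Lemma d_monic (x : R[i]) : (Z + cst x * W) \is monic.
Proof. by rewrite /Zv /Zbv /cst -rmorphM; exact: monicXaddC. Qed.

Lemma deriv_mono a b : (Z ^+ a * W ^+ b)^`() = a%:R * Z ^+ a.-1 * W ^+ b.
Proof.
rewrite derivM /Zbv -rmorphXn derivC mulr0 addr0 /Zv derivXn.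
by rewrite mulr_natl.
Qed.

Lemma refl_mono m j a b : refl m j (Z ^+ a * W ^+ b) =
  (- cst (zeta R m ^+ j) * W) ^+ a * (- cst (zeta R m ^- j) * Z) ^+ b.
Proof. by rewrite /refl ev2_mono. Qed.

Lemma cst_inv m j : (0 < m)%N -> cst (zeta R m ^+ j) * cst (zeta R m ^- j) = 1.
Proof. by move=> m0; rewrite -cstM mulfV ?zeta_neq0 // cst1. Qed.

Lemma alg1 (T : comRingType) (Z W e e' : T) n b : e * e' = 1 ->
  Z ^+ (n + b) * W ^+ b - (- e * W) ^+ (n + b) * (- e' * Z) ^+ b =
  ((\sum_(i < n) Z ^+ (n.-1 - i) * (- e * W) ^+ i) * (Z * W) ^+ b) * (Z + e * W).
Proof.
move=> ee.
have h : (- e * W) * (- e' * Z) = Z * W.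
  by transitivity ((e * e') * (Z * W)); [ring | rewrite ee mul1r].
rewrite !exprD.
transitivity (Z ^+ n * (Z * W) ^+ b - (- e * W) ^+ n * ((- e * W) * (- e' * Z)) ^+ b).
  by rewrite !exprMn; ring.
rewrite h.
transitivity ((Z ^+ n - (- e * W) ^+ n) * (Z * W) ^+ b); first by ring.
rewrite subrXX; ring.
Qed.

Lemma alg2 (T : comRingType) (Z W e e' : T) n a : e * e' = 1 ->
  Z ^+ a * W ^+ (n + a) - (- e * W) ^+ a * (- e' * Z) ^+ (n + a) =
  (e' * (\sum_(i < n) W ^+ (n.-1 - i) * (- e' * Z) ^+ i) * (Z * W) ^+ a) * (Z + e * W).
Proof.
move=> ee.
have h : (- e * W) * (- e' * Z) = Z * W.
  by transitivity ((e * e') * (Z * W)); [ring | rewrite ee mul1r].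
have hd : W + e' * Z = e' * (Z + e * W).
  by transitivity (W * (e * e') + e' * Z); [rewrite ee mulr1 | ring].
rewrite !exprD.
transitivity (W ^+ n * (Z * W) ^+ a - (- e' * Z) ^+ n * ((- e * W) * (- e' * Z)) ^+ a).
  by rewrite !exprMn; ring.
rewrite h.
transitivity ((W ^+ n - (- e' * Z) ^+ n) * (Z * W) ^+ a); first by ring.
rewrite subrXX.
set S := \sum_(i < n) _.
transitivity ((W + e' * Z) * S * (Z * W) ^+ a); first by ring.
rewrite hd; ring.
Qed.

Lemma quot1 m j a b : (0 < m)%N -> (b <= a)%N ->
  (Z ^+ a * W ^+ b - refl m j (Z ^+ a * W ^+ b)) %/ (Z + cst (zeta R m ^+ j) * W) =
  (\sum_(i < a - b) Z ^+ ((a - b).-1 - i) * (- cst (zeta R m ^+ j) * W) ^+ i) * (Z * W) ^+ b.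
Proof.
move=> m0 ba; rewrite refl_mono.
have -> : a = ((a - b) + b)%N by rewrite subnK.
rewrite addnK alg1 ?cst_inv //.
exact: Pdiv.IdomainMonic.mulpK (d_monic _) _.
Qed.

Lemma quot2 m j a b : (0 < m)%N -> (a <= b)%N ->
  (Z ^+ a * W ^+ b - refl m j (Z ^+ a * W ^+ b)) %/ (Z + cst (zeta R m ^+ j) * W) =
  cst (zeta R m ^- j) *
  (\sum_(i < b - a) W ^+ ((b - a).-1 - i) * (- cst (zeta R m ^- j) * Z) ^+ i) * (Z * W) ^+ a.
Proof.
move=> m0 ab; rewrite refl_mono.
have -> : b = ((b - a) + a)%N by rewrite subnK.
rewrite addnK alg2 ?cst_inv //.
exact: Pdiv.IdomainMonic.mulpK (d_monic _) _.
Qed.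

Lemma alg3 (T : comRingType) (Z W c : T) k i b :
  Z ^+ k * (- c * W) ^+ i * (Z * W) ^+ b =
  ((-1) ^+ i * Z ^+ (k + b) * W ^+ (b + i)) * c ^+ i.
Proof. by rewrite !exprMn (exprNn c i) !exprD; ring. Qed.

Lemma sum1 m a b : (0 < m)%N -> (b <= a)%N ->
  \sum_(j < m) ((\sum_(i < a - b) Z ^+ ((a - b).-1 - i) * (- cst (zeta R m ^+ j) * W) ^+ i)
      * (Z * W) ^+ b) =
  m%:R * \sum_(k < a - b | (m * k < a - b)%N)
            (-1) ^+ (m * k) * Z ^+ (a - m * k - 1) * W ^+ (b + m * k).
Proof.
move=> m0 ba.
under eq_bigr do rewrite mulr_suml.
rewrite exchange_big /=.
rewrite -(@reidx _ (fun i => (-1) ^+ i * Z ^+ (a - i - 1) * W ^+ (b + i)) m _ _ m0 (leqnn _)) mulr_sumr.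
apply: eq_bigr => i _.
have eN : ((a - b).-1 - i + b)%N = (a - i - 1)%N by have := ltn_ord i; lia.
under eq_bigr => j _ do rewrite alg3 eN -(cstX (zeta R m ^+ j) i) exprAC.
rewrite -mulr_sumr -cst_sum sum_zeta //.
by case: ifP; rewrite ?cst_nat ?cst0 ?mulr0 // mulrC.
Qed.

Lemma alg4 (T : comRingType) (Z W c : T) k i a :
  c * (W ^+ k * (- c * Z) ^+ i) * (Z * W) ^+ a =
  ((-1) ^+ i * Z ^+ (a + i) * W ^+ (k + a)) * c ^+ i.+1.
Proof. by rewrite !exprMn (exprNn c i) !exprD (exprS c i); ring. Qed.

Lemma zinv (x : R[i]) j n : ((x ^+ j)^-1) ^+ n = ((x ^+ n)^-1) ^+ j.
Proof. by rewrite !exprVn exprAC. Qed.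

Lemma sum2 m a b : (0 < m)%N -> (a <= b)%N ->
  \sum_(j < m) (cst (zeta R m ^- j) *
     (\sum_(i < b - a) W ^+ ((b - a).-1 - i) * (- cst (zeta R m ^- j) * Z) ^+ i) * (Z * W) ^+ a)
  = - (m%:R * \sum_(1 <= k < (b - a).+1 | (m * k <= b - a)%N)
            (-1) ^+ (m * k) * Z ^+ (a + m * k - 1) * W ^+ (b - m * k)).
Proof.
move=> m0 ab.
rewrite -(@shift_sum _ (fun k => (-1) ^+ k * Z ^+ (a + k - 1) * W ^+ (b - k)) m _ m0).
rewrite mulr_sumr -sumrN.
under eq_bigr do rewrite mulr_sumr mulr_suml.
rewrite exchange_big /=; apply: eq_bigr => i _.
have e1 : ((b - a).-1 - i + a)%N = (b - i.+1)%N by have := ltn_ord i; lia.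
have e2 : (a + i.+1 - 1)%N = (a + i)%N by lia.
under eq_bigr => j _ do rewrite alg4 e1 -(cstX (zeta R m ^- j) i.+1) zinv.
rewrite -mulr_sumr -cst_sum sum_zetaV //.
case: ifP => _; last by rewrite cst0 !mulr0 oppr0.
rewrite cst_nat e2 exprS; ring.
Qed.
End P.

Theorem proposition2p3 (R : realType) (m : nat) (c : R[i]) :
  (2 <= m)%N ->
  (forall a b : nat, (b <= a)%N ->
     dunklY m c (Zv R ^+ a * Zbv R ^+ b) =
       a%:R * Zv R ^+ a.-1 * Zbv R ^+ b
       - cst (m%:R * c) *
         \sum_(k < a - b | (m * k < a - b)%N)
            (-1) ^+ (m * k) * Zv R ^+ (a - m * k - 1) * Zbv R ^+ (b + m * k))
  /\
  (forall a b : nat, (a <= b)%N ->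
     dunklY m c (Zv R ^+ a * Zbv R ^+ b) =
       a%:R * Zv R ^+ a.-1 * Zbv R ^+ b
       + cst (m%:R * c) *
         \sum_(1 <= k < (b - a).+1 | (m * k <= b - a)%N)
            (-1) ^+ (m * k) * Zv R ^+ (a + m * k - 1) * Zbv R ^+ (b - m * k)).
Proof.
move=> m2; have m0 : (0 < m)%N by apply: ltnW.
split => a b ba; rewrite /dunklY deriv_mono.
  under eq_bigr => j _ do rewrite (quot1 _ _ _ _ _ m0 ba).
  by rewrite sum1 // cstM cst_nat; ring.
under eq_bigr => j _ do rewrite (quot2 _ _ _ _ _ m0 ba).
by rewrite sum2 // cstM cst_nat; ring.
Qed.
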